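(* Consider a POMDP with finite state space $\mathcal S$, finite action space $\mathcal A$, finite observation space $\mathcal Y$, initial state $s_1\sim\rho$, joint transition kernel $P(s',y'\mid s,a)$, reward $R_t=r(s_t,a_t)\in[0,R_{\max}]$ and discount factor $\gamma\in[0,1)$. Let $\mathcal Z$ be a finite agent-state space with update $z_{t+1}=\phi(z_t,y_{t+1},a_t)$ and let $\sigma_t:h_t\mapsto z_t$ be the map from histories $h_t=(y_{1:t},a_{1:t-1})$ to agent states obtained by unrolling $\phi$ (with $\sigma_1(h_1)=\phi(z_0,y_1,a_0)$ for a given initial agent state $z_0$ and dummy action $a_0$, and $\sigma_{t+1}(h_{t+1})=\phi(\sigma_t(h_t),y_{t+1},a_t)$). Fix $L\ge1$, write $[t]:=t\bmod L$, $\mathcal L:=\{0,\dots,L-1\}$. Let $\mu=(\mu^0,\dots,\mu^{L-1})$ be a periodic agent-state based behavior policy ($a_t\sim\mu^{[t]}(\cdot\mid z_t)$) such that the induced Markov chain $\{(S_t,Y_t,Z_t,A_t)\}_{t\ge1}$ converges to a cyclic limiting distribution $(\zeta^0_\mu,\dots,\zeta^{L-1}_\mu)$ (for each $\ell$, the law of $(S_t,Y_t,Z_t,A_t)$ converges to $\zeta^\ell_\mu$ along $t\equiv\ell\pmod L$) with $\sum_{(s,y)}\zeta^\ell_\mu(s,y,z,a)>0$ for all $(\ell,z,a)$. Define $r^\ell_\mu(z,a):=\sum_s r(s,a)\zeta^\ell_\mu(s\mid z)$ and $P^\ell_\mu(z'\mid z,a):=\sum_{(s,y')}\mathbf 1_{\{z'=\phi(z,y',a)\}}P(y'\mid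 s,a)\zeta^\ell_\mu(s\mid z)$, let $(Q^0_\mu,\dots,Q^{L-1}_\mu)$ be the unique solution of $Q^\ell_\mu(z,a)=r^\ell_\mu(z,a)+\gamma\sum_{z'}P^\ell_\mu(z'\mid z,a)\max_{a'}Q^{[\ell+1]}_\mu(z',a')$ for all $\ell,z,a$, let $V^\ell_\mu(z):=\max_{a}Q^\ell_\mu(z,a)$, let $\pi^\ell_\mu(z)\in\arg\max_aQ^\ell_\mu(z,a)$, and let $\vec\pi_\mu$ be the history-dependent policy $\vec\pi_{\mu,t}(h_t):=\pi^{[t]}_\mu(\sigma_t(h_t))$. Let $\mathfrak F$ be a convex and balanced set of real-valued functions on $\mathcal Z$, with integral probability metric $d_{\mathfrak F}$ and Minkowski functional $\rho_{\mathfrak F}$. For $\ell\in\mathcal L$ and $t\ge1$, let $\mathcal T(t,\ell):=\{\tau\ge t:[\tau]=\ell\}$ and $$\varepsilon^\ell_t:=\sup_{\tau\in\mathcal T(t,\ell)}\sup_{h_\tau,a_\tau}\Big|\mathbb E[R_\tau\mid h_\tau,a_\tau]-\sum_{s\in\mathcal S}r(s,a_\tau)\zeta^\ell_\mu(s\mid\sigma_\tau(h_\tau),a_\tau)\Big|,$$ $$\delta^\ell_t:=\sup_{\tau\in\mathcal T(t,\ell)}\sup_{h_\tau,a_\tau}d_{\mathfrak F}\Big(\Pr(Z_{\tau+1}=\cdot\mid h_\tau,a_\tau),\,P^\ell_\mu(\cdot\mid\sigma_\tau(h_\tau),a_\tau)\Big).$$ Then for every $t\ge1$, $$\sup_{h_t}\big[V^\star_t(h_t)-V^{\vec\pi_\mu}_t(h_t)\big]\le\frac{2}{1-\gamma^L}\sum_{\ell\in\mathcal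 L}\gamma^\ell\Big[\varepsilon^{[t+\ell]}_{t+\ell}+\gamma\,\delta^{[t+\ell]}_{t+\ell}\,\rho_{\mathfrak F}\big(V^{[t+\ell+1]}_\mu\big)\Big].$$
   Context: $P(y'\mid s,a):=\sum_{s'}P(s',y'\mid s,a)$. Marginals/conditionals of $\zeta^\ell_\mu$ use the same symbol, e.g. $\zeta^\ell_\mu(s\mid z)=\zeta^\ell_\mu(s,z)/\zeta^\ell_\mu(z)$ and $\zeta^\ell_\mu(s\mid z,a)=\zeta^\ell_\mu(s,z,a)/\zeta^\ell_\mu(z,a)$. For a history-dependent (possibly randomized) policy $\vec\pi$, $V^{\vec\pi}_t(h_t):=\mathbb E^{\vec\pi}\big[\sum_{\tau=t}^\infty\gamma^\tau R_\tau\mid h_t\big]$, and $V^\star_t(h_t):=\sup_{\vec\pi}V^{\vec\pi}_t(h_t)$, the supremum being over all history-dependent policies. $\mathfrak F$ balanced means $af\in\mathfrak F$ whenever $f\in\mathfrak F$ and $|a|\le1$. For probability measures $\xi_1,\xi_2$ on $\mathcal Z$, $d_{\mathfrak F}(\xi_1,\xi_2):=\sup_{f\in\mathfrak F}|\int f\,d\xi_1-\int f\,d\xi_2|$; for $f:\mathcal Z\to\mathbb R$, $\rho_{\mathfrak F}(f):=\inf\{\rho>0: f/\rho\in\mathfrak F\}$ (equal to $\infty$ if no such $\rho$ exists). *)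

(* Defs.v *)
From HB Require Import structures.
From mathcomp Require Import all_boot all_order all_algebra.
From mathcomp Require Import all_classical all_reals all_analysis.

Set Implicit Arguments.
Unset Strict Implicit.
Unset Printing Implicit Defensive.

Import Order.TTheory GRing.Theory Num.Theory.
Local Open Scope ring_scope.

(* Histories h_t = (y_1 ; [(a_1,y_2); ...; (a_{t-1},y_t)]); t = size + 1 *)

Definition hist (A Y : Type) := (Y * seq (A * Y))%type.

Definition htime (A Y : Type) (h : hist A Y) : nat := (size h.2).+1.

Definition agent_state (A Y Z : Type) (phi : Z -> Y -> A -> Z) (z0 : Z) (a0 : A)
  (h : hist A Y) : Z :=
  foldl (fun z ay => phi z ay.2 ay.1) (phi z0 h.1 a0) h.2.

(* Unnormalized filter: alpha(h_t)(s) = Pr(S_t = s, y_{1:t} | a_{1:t-1}).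
   rho s y is the joint law of (S_1, Y_1); P s' y' s a = P(s',y' | s,a). *)
Definition alpha (R : realType) (S A Y : finType)
  (rho : S -> Y -> R) (P : S -> Y -> S -> A -> R) (h : hist A Y) : S -> R :=
  foldl (fun al ay => fun s' => \sum_(s : S) al s * P s' ay.2 s ay.1)
        (fun s => rho s h.1) h.2.

Definition reachable (R : realType) (S A Y : finType)
  (rho : S -> Y -> R) (P : S -> Y -> S -> A -> R) (h : hist A Y) : Prop :=
  0 < \sum_(s : S) alpha rho P h s.

Definition belief (R : realType) (S A Y : finType)
  (rho : S -> Y -> R) (P : S -> Y -> S -> A -> R) (h : hist A Y) (s : S) : R :=
  alpha rho P h s / \sum_(s0 : S) alpha rho P h s0.

Definition pred_obs (R : realType) (S A Y : finType)
  (rho : S -> Y -> R) (P : S -> Y -> S -> A -> R) (h : hist A Y) (a : A) (y' : Y) : R :=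
  \sum_(s : S) belief rho P h s * \sum_(s' : S) P s' y' s a.

Definition exp_reward (R : realType) (S A Y : finType)
  (rho : S -> Y -> R) (P : S -> Y -> S -> A -> R) (r : S -> A -> R)
  (h : hist A Y) (a : A) : R :=
  \sum_(s : S) belief rho P h s * r s a.

Definition next_agent_state_law (R : realType) (S A Y Z : finType)
  (rho : S -> Y -> R) (P : S -> Y -> S -> A -> R)
  (phi : Z -> Y -> A -> Z) (z0 : Z) (a0 : A) (h : hist A Y) (a : A) (z' : Z) : R :=
  \sum_(y' : Y) pred_obs rho P h a y' *
     (z' == phi (agent_state phi z0 a0 h) y' a)%:R.

Definition hpolicy (R : realType) (A Y : Type) := hist A Y -> A -> R.

Definition is_dist (R : realType) (T : finType) (p : T -> R) : Prop :=
  (forall x, 0 <= p x) /\ \sum_(x : T) p x = 1.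

Definition valid_hpolicy (R : realType) (A Y : finType) (pi : hpolicy R A Y) : Prop :=
  forall h, is_dist (pi h).

(* exp_step k h = E^pi[ R_{t+k} | h_t = h ] *)
Fixpoint exp_step (R : realType) (S A Y : finType)
  (rho : S -> Y -> R) (P : S -> Y -> S -> A -> R) (r : S -> A -> R)
  (pi : hpolicy R A Y) (k : nat) (h : hist A Y) {struct k} : R :=
  match k with
  | 0 => \sum_(a : A) pi h a * exp_reward rho P r h a
  | k'.+1 => \sum_(a : A) pi h a *
        \sum_(y' : Y) pred_obs rho P h a y' *
           exp_step rho P r pi k' (h.1, rcons h.2 (a, y'))
  end.

Definition Vpi (R : realType) (S A Y : finType)
  (rho : S -> Y -> R) (P : S -> Y -> S -> A -> R) (r : S -> A -> R) (gamma : R)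
  (pi : hpolicy R A Y) (h : hist A Y) : \bar R :=
  (\sum_(k <oo) ((gamma ^+ (htime h + k) * exp_step rho P r pi k h)%:E))%E.

Definition Vstar (R : realType) (S A Y : finType)
  (rho : S -> Y -> R) (P : S -> Y -> S -> A -> R) (r : S -> A -> R) (gamma : R)
  (h : hist A Y) : \bar R :=
  ereal_sup [set Vpi rho P r gamma pi h | pi in [set pi | valid_hpolicy pi]].

(* chain_law k s y z a = Pr(S_t=s, Y_t=y, Z_t=z, A_t=a) with t = k+1,
   under a_t ~ mu^{[t]}(.|z_t). *)
Fixpoint chain_law (R : realType) (S A Y Z : finType)
  (rho : S -> Y -> R) (P : S -> Y -> S -> A -> R)
  (phi : Z -> Y -> A -> Z) (z0 : Z) (a0 : A) (L : nat)
  (mu : nat -> Z -> A -> R) (k : nat) {struct k} : S -> Y -> Z -> A -> R :=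
  match k with
  | 0 => fun s y z a => rho s y * (z == phi z0 y a0)%:R * mu (1 %% L)%N z a
  | k'.+1 => fun s' y' z' a' =>
      \sum_(s : S) \sum_(y : Y) \sum_(z : Z) \sum_(a : A)
        chain_law rho P phi z0 a0 L mu k' s y z a * P s' y' s a *
        (z' == phi z y' a)%:R * mu (k'.+2 %% L)%N z' a'
  end.

Definition zeta_sz (R : realType) (S A Y Z : finType)
  (zeta : S -> Y -> Z -> A -> R) (s : S) (z : Z) : R :=
  \sum_(y : Y) \sum_(a : A) zeta s y z a.
Definition zeta_cond_z (R : realType) (S A Y Z : finType)
  (zeta : S -> Y -> Z -> A -> R) (s : S) (z : Z) : R :=
  zeta_sz zeta s z / \sum_(s0 : S) zeta_sz zeta s0 z.
Definition zeta_sza (R : realType) (S A Y Z : finType)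
  (zeta : S -> Y -> Z -> A -> R) (s : S) (z : Z) (a : A) : R :=
  \sum_(y : Y) zeta s y z a.
Definition zeta_cond_za (R : realType) (S A Y Z : finType)
  (zeta : S -> Y -> Z -> A -> R) (s : S) (z : Z) (a : A) : R :=
  zeta_sza zeta s z a / \sum_(s0 : S) zeta_sza zeta s0 z a.

Definition r_mu (R : realType) (S A Y Z : finType) (r : S -> A -> R)
  (zeta : S -> Y -> Z -> A -> R) (z : Z) (a : A) : R :=
  \sum_(s : S) r s a * zeta_cond_z zeta s z.

Definition P_mu (R : realType) (S A Y Z : finType) (P : S -> Y -> S -> A -> R)
  (phi : Z -> Y -> A -> Z) (zeta : S -> Y -> Z -> A -> R) (z' z : Z) (a : A) : R :=
  \sum_(s : S) \sum_(y' : Y)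
     (z' == phi z y' a)%:R * (\sum_(s' : S) P s' y' s a) * zeta_cond_z zeta s z.

Definition max_act (R : realType) (A : Type) (f : A -> R) : R := sup (range f).

Definition convex_fset (R : realType) (Z : Type) (F : set (Z -> R)) : Prop :=
  forall f g (l : R), F f -> F g -> 0 <= l <= 1 ->
    F (fun z => l * f z + (1 - l) * g z).

Definition balanced_fset (R : realType) (Z : Type) (F : set (Z -> R)) : Prop :=
  forall f (c : R), F f -> `|c| <= 1 -> F (fun z => c * f z).

Definition ipm_F (R : realType) (Z : finType) (F : set (Z -> R)) (xi1 xi2 : Z -> R) : \bar R :=
  ereal_sup [set (`| \sum_(z : Z) f z * xi1 z - \sum_(z : Z) f z * xi2 z |)%:E
             | f in F].

(* rho_F(f) = inf { rho > 0 : f / rho in F }  (+oo if empty) *)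
Definition minkowski_F (R : realType) (Z : Type) (F : set (Z -> R)) (f : Z -> R) : \bar R :=
  ereal_inf [set (c%:E) | c in [set c : R | 0 < c /\ F (fun z => f z / c)]].

Definition mul_inf (R : realType) (x y : \bar R) : \bar R :=
  if (x == +oo)%E || (y == +oo)%E then +oo%E else (x * y)%E.

Definition pi_vec (R : realType) (A Y Z : finType) (phi : Z -> Y -> A -> Z)
  (z0 : Z) (a0 : A) (L : nat) (pimu : nat -> Z -> A) : hpolicy R A Y :=
  fun h a => (a == pimu (htime h %% L)%N (agent_state phi z0 a0 h))%:R.

Definition eps_err (R : realType) (S A Y Z : finType)
  (rho : S -> Y -> R) (P : S -> Y -> S -> A -> R) (r : S -> A -> R)
  (phi : Z -> Y -> A -> Z) (z0 : Z) (a0 : A) (L : nat)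
  (zeta : nat -> S -> Y -> Z -> A -> R) (l t : nat) : \bar R :=
  ereal_sup [set x | exists (h : hist A Y) (a : A),
     [/\ (t <= htime h)%N, (htime h %% L)%N = l, reachable rho P h &
         x = (`| exp_reward rho P r h a -
                 \sum_(s : S) r s a *
                    zeta_cond_za (zeta l) s (agent_state phi z0 a0 h) a |)%:E]].

Definition delta_err (R : realType) (S A Y Z : finType)
  (rho : S -> Y -> R) (P : S -> Y -> S -> A -> R)
  (phi : Z -> Y -> A -> Z) (z0 : Z) (a0 : A) (L : nat)
  (zeta : nat -> S -> Y -> Z -> A -> R) (F : set (Z -> R)) (l t : nat) : \bar R :=
  ereal_sup [set x | exists (h : hist A Y) (a : A),
     [/\ (t <= htime h)%N, (htime h %% L)%N = l, reachable rho P h &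
         x = ipm_F F (next_agent_state_law rho P phi z0 a0 h a)
                   (fun z' => P_mu P phi (zeta l) z' (agent_state phi z0 a0 h) a)]].

(* Main.v *)
Require Import Defs.
From HB Require Import structures.
From mathcomp Require Import all_boot all_order all_algebra.
From mathcomp Require Import all_classical all_reals all_analysis.
From mathcomp Require Import ring lra.
Import Order.TTheory GRing.Theory Num.Theory numFieldNormedType.Exports.
Local Open Scope classical_set_scope.
Local Open Scope ring_scope.
Set Implicit Arguments.
Unset Strict Implicit.
Unset Printing Implicit Defensive.

Lemma alpha_ge0 (R : realType) (S A Y : finType) (rho : S -> Y -> R)
  (P : S -> Y -> S -> A -> R) :
  (forall s y, 0 <= rho s y) -> (forall s' y s a, 0 <= P s' y s a) ->
  forall h s, 0 <= alpha rho P h s.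
Proof.
move=> hr hP [y0 l]; rewrite /alpha /=.
have H : forall (l : seq (A * Y)) (g : S -> R), (forall s, 0 <= g s) -> forall s,
  0 <= foldl (fun al ay => fun s' => \sum_(s : S) al s * P s' ay.2 s ay.1) g l s.
  elim=> [|[a y] l' IH] g Hg //= s.
  apply: IH => s'; apply: sumr_ge0 => i _; exact: mulr_ge0.
exact: H.
Qed.

Lemma alpha_rcons (R : realType) (S A Y : finType) (rho : S -> Y -> R)
  (P : S -> Y -> S -> A -> R) h a y s' :
  alpha rho P (h.1, rcons h.2 (a, y)) s' = \sum_s alpha rho P h s * P s' y s a.
Proof. by rewrite /alpha /= foldl_rcons. Qed.

Lemma agent_state_rcons (A Y Z : Type) (phi : Z -> Y -> A -> Z) z0 a0 (h : hist A Y) a y :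
  agent_state phi z0 a0 (h.1, rcons h.2 (a, y)) = phi (agent_state phi z0 a0 h) y a.
Proof. by rewrite /agent_state /= foldl_rcons. Qed.

Lemma htime_rcons (A Y : Type) (h : hist A Y) a y :
  htime (h.1, rcons h.2 (a, y)) = (htime h).+1.
Proof. by rewrite /htime /= size_rcons. Qed.

Lemma belief_ge0 (R : realType) (S A Y : finType) (rho : S -> Y -> R)
  (P : S -> Y -> S -> A -> R) :
  (forall s y, 0 <= rho s y) -> (forall s' y s a, 0 <= P s' y s a) ->
  forall h s, 0 <= belief rho P h s.
Proof.
move=> hr hP h s; rewrite /belief; apply: divr_ge0; first exact: alpha_ge0.
apply: sumr_ge0 => i _; exact: alpha_ge0.
Qed.

Lemma belief_sum1 (R : realType) (S A Y : finType) (rho : S -> Y -> R)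
  (P : S -> Y -> S -> A -> R) h :
  reachable rho P h -> \sum_s belief rho P h s = 1.
Proof.
rewrite /reachable /belief => H; rewrite -mulr_suml divff //; exact: lt0r_neq0.
Qed.

Lemma pred_obs_ge0 (R : realType) (S A Y : finType) (rho : S -> Y -> R)
  (P : S -> Y -> S -> A -> R) :
  (forall s y, 0 <= rho s y) -> (forall s' y s a, 0 <= P s' y s a) ->
  forall h a y, 0 <= pred_obs rho P h a y.
Proof.
move=> hr hP h a y; apply: sumr_ge0 => s _; apply: mulr_ge0; first exact: belief_ge0.
by apply: sumr_ge0.
Qed.

Lemma pred_obs_sum1 (R : realType) (S A Y : finType) (rho : S -> Y -> R)
  (P : S -> Y -> S -> A -> R) :
  (forall s a, \sum_y \sum_s' P s' y s a = 1) ->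
  forall h a, reachable rho P h -> \sum_y pred_obs rho P h a y = 1.
Proof.
move=> hP h a Hr; rewrite /pred_obs exchange_big /=.
rewrite -(belief_sum1 Hr); apply: eq_bigr => s _.
by rewrite -mulr_sumr hP mulr1.
Qed.

Lemma pred_obs_reach (R : realType) (S A Y : finType) (rho : S -> Y -> R)
  (P : S -> Y -> S -> A -> R) :
  (forall s y, 0 <= rho s y) -> (forall s' y s a, 0 <= P s' y s a) ->
  forall h a y, reachable rho P h -> 0 < pred_obs rho P h a y ->
  reachable rho P (h.1, rcons h.2 (a, y)).
Proof.
move=> hr hP h a y Hr Hp; rewrite /reachable.
under eq_bigr do rewrite alpha_rcons.
move: Hp; rewrite /pred_obs /belief.
have -> : \sum_s alpha rho P h s / (\sum_s0 alpha rho P h s0) * \sum_s' P s' y s a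
   = (\sum_s alpha rho P h s * \sum_s' P s' y s a) / (\sum_s0 alpha rho P h s0).
  by rewrite mulr_suml; apply: eq_bigr => s _; rewrite mulrAC.
have -> : \sum_s' \sum_s alpha rho P h s * P s' y s a =
   \sum_s alpha rho P h s * \sum_s' P s' y s a.
  by rewrite exchange_big /=; apply: eq_bigr => s _; rewrite mulr_sumr.
move=> H; rewrite -[X in 0 < X](divfK (lt0r_neq0 Hr)); exact: mulr_gt0.
Qed.

Lemma exists_pos_pred (R : realType) (S A Y : finType) (rho : S -> Y -> R)
  (P : S -> Y -> S -> A -> R) :
  (forall s y, 0 <= rho s y) -> (forall s' y s a, 0 <= P s' y s a) ->
  (forall s a, \sum_y \sum_s' P s' y s a = 1) ->
  forall h a, reachable rho P h -> exists y, 0 < pred_obs rho P h a y.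
Proof.
move=> hr hP hP1 h a Hr; apply/not_existsP => H.
have : \sum_y pred_obs rho P h a y <= 0.
  apply: sumr_le0 => y _; rewrite leNgt; apply/negP => /[dup] Hy; exact: H.
by rewrite pred_obs_sum1 // ler10.
Qed.

Lemma reach_extend (R : realType) (S A Y : finType) (rho : S -> Y -> R)
  (P : S -> Y -> S -> A -> R) (a0 : A) :
  (forall s y, 0 <= rho s y) -> (forall s' y s a, 0 <= P s' y s a) ->
  (forall s a, \sum_y \sum_s' P s' y s a = 1) ->
  forall m h, reachable rho P h -> exists h', reachable rho P h' /\ htime h' = (htime h + m)%N.
Proof.
move=> hr hP hP1; elim=> [|m IH] h Hr; first by exists h; rewrite addn0.
have [y Hy] := exists_pos_pred hr hP hP1 a0 Hr.
have [h' [H1 H2]] := IH _ (pred_obs_reach hr hP Hr Hy).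
by exists h'; split => //; rewrite H2 htime_rcons addSnnS.
Qed.

Definition Ssum (R : realType) (S A Y : finType)
  (rho : S -> Y -> R) (P : S -> Y -> S -> A -> R) (r : S -> A -> R) (gamma : R)
  (pi : hpolicy R A Y) (n : nat) (h : hist A Y) : R :=
  \sum_(j < n) gamma ^+ j * exp_step rho P r pi j h.

Lemma Ssum_rec (R : realType) (S A Y : finType)
  (rho : S -> Y -> R) (P : S -> Y -> S -> A -> R) (r : S -> A -> R) (gamma : R)
  (pi : hpolicy R A Y) n h :
  Ssum rho P r gamma pi n.+1 h =
  \sum_a pi h a * (exp_reward rho P r h a + gamma *
     \sum_y pred_obs rho P h a y * Ssum rho P r gamma pi n (h.1, rcons h.2 (a, y))).
Proof.
rewrite /Ssum big_ord_recl expr0 mul1r /=.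
under [RHS]eq_bigr do rewrite mulrDr; rewrite big_split /=; congr (_ + _).
transitivity (\sum_(i < n) \sum_a \sum_y
   gamma ^+ i.+1 * (pi h a * (pred_obs rho P h a y *
      exp_step rho P r pi i (h.1, rcons h.2 (a, y))))).
  apply: eq_bigr => i _; rewrite mulr_sumr; apply: eq_bigr => a _.
  rewrite mulr_sumr mulr_sumr; apply: eq_bigr => y _; by [].
rewrite exchange_big /=; apply: eq_bigr => a _.
rewrite mulr_sumr mulr_sumr exchange_big /=; apply: eq_bigr => y _.
rewrite mulr_sumr mulr_sumr mulr_sumr; apply: eq_bigr => i _.
by rewrite exprS; ring.
Qed.

Lemma Ssum_upper (R : realType) (S A Y Z : finType)
  (rho : S -> Y -> R) (P : S -> Y -> S -> A -> R) (r : S -> A -> R) (gamma : R)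
  (phi : Z -> Y -> A -> Z) (z0 : Z) (a0 : A)
  (pi : hpolicy R A Y) (W : nat -> Z -> R) (e : nat -> R) (C : R) (t : nat) :
  0 <= gamma -> valid_hpolicy pi ->
  (forall s y, 0 <= rho s y) -> (forall s' y s a, 0 <= P s' y s a) ->
  (forall s a, \sum_y \sum_s' P s' y s a = 1) ->
  (forall tau z, `|W tau z| <= C) ->
  (forall k h a, reachable rho P h -> htime h = (t + k)%N ->
     exp_reward rho P r h a + gamma * \sum_y pred_obs rho P h a y *
        W (t + k).+1 (phi (agent_state phi z0 a0 h) y a)
     <= W (t + k)%N (agent_state phi z0 a0 h) + e k) ->
  forall n k h, reachable rho P h -> htime h = (t + k)%N ->
  Ssum rho P r gamma pi n h <= W (t + k)%N (agent_state phi z0 a0 h)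
     + \sum_(j < n) gamma ^+ j * e (k + j)%N + gamma ^+ n * C.
Proof.
move=> g0 hpi hr hP hP1 HC Hstep; elim=> [|n IH] k h Hr Ht.
  rewrite /Ssum !big_ord0 expr0 mul1r addr0.
  by move: (HC (t + k)%N (agent_state phi z0 a0 h)); rewrite ler_norml => /andP[H1 H2]; lra.
set B := \sum_(j < n) gamma ^+ j * e (k.+1 + j)%N + gamma ^+ n * C.
have -> : W (t + k)%N (agent_state phi z0 a0 h) + \sum_(j < n.+1) gamma ^+ j * e (k + j)%N
   + gamma ^+ n.+1 * C = W (t + k)%N (agent_state phi z0 a0 h) + e k + gamma * B.
  rewrite big_ord_recl expr0 mul1r addn0 /B mulrDr mulr_sumr exprS.
  under [X in _ = _ + _ + (X + _)]eq_bigr do rewrite mulrA -exprS addSnnS.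
  rewrite /bump /=; ring.
rewrite Ssum_rec.
have [hpi0 hpi1] := hpi h.
rewrite -[X in _ <= X]mul1r -hpi1 mulr_suml; apply: ler_sum => a _.
apply: ler_wpM2l; first exact: hpi0.
apply: le_trans (_ : exp_reward rho P r h a + gamma * (\sum_y pred_obs rho P h a y *
        W (t + k).+1 (phi (agent_state phi z0 a0 h) y a)) + gamma * B <= _); last first.
  by rewrite lerD2r; exact: Hstep.
rewrite -addrA lerD2l -mulrDr; apply: ler_wpM2l => //.
rewrite -[X in _ <= _ + X]mul1r -(pred_obs_sum1 hP1 a Hr) mulr_suml -big_split /=.
apply: ler_sum => y _.
have := pred_obs_ge0 hr hP h a y; rewrite le_eqVlt => /orP[/eqP <-|Hpos].
  by rewrite !mul0r add0r.
rewrite -mulrDr; apply: ler_wpM2l; first exact: ltW.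
have := IH k.+1 _ (pred_obs_reach hr hP Hr Hpos).
rewrite htime_rcons Ht agent_state_rcons addnS => /(_ erefl).
by rewrite -addrA.
Qed.

Lemma sum_ind (R : realType) (A : finType) (b : A) (F : A -> R) :
  \sum_a (a == b)%:R * F a = F b.
Proof.
rewrite (bigD1 b) //= eqxx mul1r big1 ?addr0 // => a /negbTE ->; by rewrite mul0r.
Qed.

Lemma Ssum_lower (R : realType) (S A Y Z : finType)
  (rho : S -> Y -> R) (P : S -> Y -> S -> A -> R) (r : S -> A -> R) (gamma : R)
  (phi : Z -> Y -> A -> Z) (z0 : Z) (a0 : A) (L : nat) (pimu : nat -> Z -> A)
  (W : nat -> Z -> R) (e : nat -> R) (C : R) (t : nat) :
  0 <= gamma ->
  (forall s y, 0 <= rho s y) -> (forall s' y s a, 0 <= P s' y s a) ->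
  (forall s a, \sum_y \sum_s' P s' y s a = 1) ->
  (forall tau z, `|W tau z| <= C) ->
  (forall k h, reachable rho P h -> htime h = (t + k)%N ->
     let a := pimu ((t + k) %% L)%N (agent_state phi z0 a0 h) in
     W (t + k)%N (agent_state phi z0 a0 h) - e k <=
     exp_reward rho P r h a + gamma * \sum_y pred_obs rho P h a y *
        W (t + k).+1 (phi (agent_state phi z0 a0 h) y a)) ->
  forall n k h, reachable rho P h -> htime h = (t + k)%N ->
  W (t + k)%N (agent_state phi z0 a0 h)
     - \sum_(j < n) gamma ^+ j * e (k + j)%N - gamma ^+ n * C
  <= Ssum rho P r gamma (pi_vec R phi z0 a0 L pimu) n h.
Proof.
move=> g0 hr hP hP1 HC Hstep; elim=> [|n IH] k h Hr Ht.
  rewrite /Ssum !big_ord0 expr0 mul1r subr0.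
  by move: (HC (t + k)%N (agent_state phi z0 a0 h)); rewrite ler_norml => /andP[H1 H2]; lra.
set B := \sum_(j < n) gamma ^+ j * e (k.+1 + j)%N + gamma ^+ n * C.
have -> : W (t + k)%N (agent_state phi z0 a0 h) - \sum_(j < n.+1) gamma ^+ j * e (k + j)%N
   - gamma ^+ n.+1 * C = W (t + k)%N (agent_state phi z0 a0 h) - e k - gamma * B.
  rewrite big_ord_recl expr0 mul1r addn0 /B mulrDr mulr_sumr exprS.
  under [X in _ = _ - _ - (X + _)]eq_bigr do rewrite mulrA -exprS addSnnS.
  rewrite /bump /=; ring.
rewrite Ssum_rec; set pv := pi_vec R phi z0 a0 L pimu.
set a := pimu ((t + k) %% L)%N (agent_state phi z0 a0 h).
rewrite (_ : \sum_a1 pv h a1 * _ = exp_reward rho P r h a + gamma *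
     \sum_y pred_obs rho P h a y * Ssum rho P r gamma pv n (h.1, rcons h.2 (a, y))); last first.
  by rewrite /pv /pi_vec Ht sum_ind.
apply: le_trans (_ : W (t + k)%N (agent_state phi z0 a0 h) - e k - gamma * B <=
   exp_reward rho P r h a + gamma * (\sum_y pred_obs rho P h a y *
        W (t + k).+1 (phi (agent_state phi z0 a0 h) y a)) - gamma * B) _.
  by rewrite lerD2r; exact: Hstep.
rewrite -addrA lerD2l -mulrN -mulrDr; apply: ler_wpM2l => //.
rewrite -[X in _ + - X <= _]mul1r -(pred_obs_sum1 hP1 a Hr) mulr_suml -sumrN -big_split /=.
apply: ler_sum => y _.
have := pred_obs_ge0 hr hP h a y; rewrite le_eqVlt => /orP[/eqP <-|Hpos].
  by rewrite !mul0r oppr0 add0r.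
rewrite -mulrN -mulrDr; apply: ler_wpM2l; first exact: ltW.
have := IH k.+1 _ (pred_obs_reach hr hP Hr Hpos).
rewrite htime_rcons Ht agent_state_rcons addnS => /(_ erefl).
by rewrite -addrA opprD addrA.
Qed.

Lemma lim_slack (R : realType) (x b c g : R) :
  0 <= g < 1 -> (forall m, x <= b + g ^+ m * c) -> x <= b.
Proof.
move=> /andP[g0 g1] H.
have cv : (fun m => b + g ^+ m * c) @ \oo --> b.
  rewrite -[X in _ --> X]addr0; apply: cvgD; first exact: cvg_cst.
  rewrite -(mul0r c); apply: cvgM; last exact: cvg_cst.
  by apply: cvg_expr; rewrite ger0_norm.
rewrite -(cvg_lim (@Rhausdorff R) cv); apply: limr_ge; first exact: cvgP cv.
by apply: nearW => m; exact: H.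
Qed.

Lemma exp_reward_ge0 (R : realType) (S A Y : finType)
  (rho : S -> Y -> R) (P : S -> Y -> S -> A -> R) (r : S -> A -> R) :
  (forall s y, 0 <= rho s y) -> (forall s' y s a, 0 <= P s' y s a) ->
  (forall s a, 0 <= r s a) -> forall h a, 0 <= exp_reward rho P r h a.
Proof.
move=> hr hP hR h a; apply: sumr_ge0 => s _; apply: mulr_ge0 => //; exact: belief_ge0.
Qed.

Lemma exp_step_ge0 (R : realType) (S A Y : finType)
  (rho : S -> Y -> R) (P : S -> Y -> S -> A -> R) (r : S -> A -> R) (pi : hpolicy R A Y) :
  (forall s y, 0 <= rho s y) -> (forall s' y s a, 0 <= P s' y s a) ->
  (forall s a, 0 <= r s a) -> valid_hpolicy pi ->
  forall k h, 0 <= exp_step rho P r pi k h.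
Proof.
move=> hr hP hR hpi; elim=> [|k IH] h /=.
  apply: sumr_ge0 => a _; apply: mulr_ge0; first exact: (hpi h).1.
  exact: exp_reward_ge0.
apply: sumr_ge0 => a _; apply: mulr_ge0; first exact: (hpi h).1.
apply: sumr_ge0 => y _; apply: mulr_ge0; [exact: pred_obs_ge0|exact: IH].
Qed.

Lemma Vpi_partial (R : realType) (S A Y : finType)
  (rho : S -> Y -> R) (P : S -> Y -> S -> A -> R) (r : S -> A -> R) (gamma : R)
  (pi : hpolicy R A Y) (h : hist A Y) n :
  (\sum_(0 <= k < n) ((gamma ^+ (htime h + k) * exp_step rho P r pi k h)%:E))%E
  = ((gamma ^+ htime h * Ssum rho P r gamma pi n h)%:E).
Proof.
rewrite sumEFin big_mkord /Ssum mulr_sumr; congr (_%:E); apply: eq_bigr => k _.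
by rewrite exprD mulrA.
Qed.

Lemma Vpi_ge (R : realType) (S A Y : finType)
  (rho : S -> Y -> R) (P : S -> Y -> S -> A -> R) (r : S -> A -> R) (gamma : R)
  (pi : hpolicy R A Y) (h : hist A Y) :
  0 <= gamma -> (forall k, 0 <= exp_step rho P r pi k h) ->
  forall n, ((gamma ^+ htime h * Ssum rho P r gamma pi n h)%:E <= Vpi rho P r gamma pi h)%E.
Proof.
move=> g0 H n; rewrite -Vpi_partial /Vpi; apply: nneseries_lim_ge => k _ _.
by rewrite lee_fin; apply: mulr_ge0 => //; apply: exprn_ge0.
Qed.

Lemma Vpi_le (R : realType) (S A Y : finType)
  (rho : S -> Y -> R) (P : S -> Y -> S -> A -> R) (r : S -> A -> R) (gamma : R)
  (pi : hpolicy R A Y) (h : hist A Y) (b : R) :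
  0 <= gamma -> (forall k, 0 <= exp_step rho P r pi k h) ->
  (forall n, gamma ^+ htime h * Ssum rho P r gamma pi n h <= b) ->
  (Vpi rho P r gamma pi h <= b%:E)%E.
Proof.
move=> g0 H Hb; rewrite /Vpi; apply: lime_le.
  apply: is_cvg_nneseries => k _ _.
  by rewrite lee_fin; apply: mulr_ge0 => //; apply: exprn_ge0.
by apply: nearW => n; rewrite Vpi_partial lee_fin.
Qed.

Lemma periodic_bound (R : realType) (g : R) (E : nat -> R) (L : nat) :
  0 <= g < 1 -> (0 < L)%N -> (forall l, (l < L)%N -> 0 <= E l) ->
  forall n, \sum_(j < n) g ^+ j * E (j %% L)%N <= (\sum_(l < L) g ^+ l * E l) / (1 - g ^+ L).
Proof.
move=> /andP[g0 g1] L0 E0.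
set X := \sum_(l < L) g ^+ l * E l.
have X0 : 0 <= X.
  by apply: sumr_ge0 => l _; apply: mulr_ge0; [exact: exprn_ge0|exact: (E0 _ (ltn_ord l))].
have gL : g ^+ L < 1 by rewrite exprn_ilt1 // -lt0n.
have gL0 : 0 <= g ^+ L by apply: exprn_ge0.
have D0 : 0 < 1 - g ^+ L by rewrite subr_gt0.
have XG : X <= X / (1 - g ^+ L).
  by rewrite ler_pdivlMr // ler_piMr //; lra.
have TL : \sum_(j < L) g ^+ j * E (j %% L)%N = X.
  by apply: eq_bigr => j _; rewrite modn_small.
elim/ltn_ind=> n IH.
case: (ltnP n L) => Hn.
  apply: le_trans XG; rewrite -TL -(subnKC (ltnW Hn)) big_split_ord /=.
  rewrite lerDl; apply: sumr_ge0 => j _; apply: mulr_ge0; [exact: exprn_ge0|apply: E0; rewrite (subnKC (ltnW Hn)) ltn_pmod //].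
rewrite -(subnKC Hn) big_split_ord /= TL.
have -> : \sum_(i < n - L) g ^+ (L + i) * E ((L + i) %% L)%N
   = g ^+ L * \sum_(i < n - L) g ^+ i * E (i %% L)%N.
  by rewrite mulr_sumr; apply: eq_bigr => i _; rewrite modnDl exprD mulrA.
apply: le_trans (_ : X + g ^+ L * (X / (1 - g ^+ L)) <= _).
  rewrite lerD2l; apply: ler_wpM2l => //; apply: IH.
  by rewrite ltn_subrL L0 /=; apply: leq_trans L0 Hn.
have -> : X + g ^+ L * (X / (1 - g ^+ L)) = X / (1 - g ^+ L).
  by field; rewrite gt_eqF.
by [].
Qed.

Lemma chain_law_S (R : realType) (S A Y Z : finType)
  (rho : S -> Y -> R) (P : S -> Y -> S -> A -> R)
  (phi : Z -> Y -> A -> Z) (z0 : Z) (a0 : A) (L : nat) (mu : nat -> Z -> A -> R) n s' y' z' a' :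
  chain_law rho P phi z0 a0 L mu n.+1 s' y' z' a' =
      \sum_(s : S) \sum_(y : Y) \sum_(z : Z) \sum_(a : A)
        chain_law rho P phi z0 a0 L mu n s y z a * P s' y' s a *
        (z' == phi z y' a)%:R * mu (n.+2 %% L)%N z' a'.
Proof. by []. Qed.

Lemma chain_factor (R : realType) (S A Y Z : finType)
  (rho : S -> Y -> R) (P : S -> Y -> S -> A -> R)
  (phi : Z -> Y -> A -> Z) (z0 : Z) (a0 : A) (L : nat) (mu : nat -> Z -> A -> R) :
  (0 < L)%N -> (forall l, (l < L)%N -> forall z, \sum_a mu l z a = 1) ->
  forall n s y z a, chain_law rho P phi z0 a0 L mu n s y z a =
    mu (n.+1 %% L)%N z a * \sum_a' chain_law rho P phi z0 a0 L mu n s y z a'.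
Proof.
move=> L0 hmu [|n] s y z a.
  by rewrite /= -mulr_sumr hmu ?ltn_pmod // mulr1 mulrC.
pose G := fun a' : A => \sum_s0 \sum_y0 \sum_z1 \sum_a1
    (chain_law rho P phi z0 a0 L mu n s0 y0 z1 a1 * P s y s0 a1 * (z == phi z1 y a1)%:R).
have E : forall a', \sum_s0 \sum_y0 \sum_z1 \sum_a1
    (chain_law rho P phi z0 a0 L mu n s0 y0 z1 a1 * P s y s0 a1 * (z == phi z1 y a1)%:R
       * mu (n.+2 %% L)%N z a') = G a' * mu (n.+2 %% L)%N z a'.
  move=> a'; rewrite /G !mulr_suml; apply: eq_bigr => s0 _; rewrite !mulr_suml.
  apply: eq_bigr => y0 _; rewrite !mulr_suml; apply: eq_bigr => z1 _.
  by rewrite !mulr_suml.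
under eq_bigr do rewrite chain_law_S E.
rewrite chain_law_S E /G -mulr_sumr hmu ?ltn_pmod // mulr1 mulrC.
by [].
Qed.

Lemma cvg_sum_fin (R : realType) (I : finType) (f : I -> nat -> R) (l : I -> R) :
  (forall i, f i n @[n --> \oo] --> l i) ->
  (\sum_i f i n) @[n --> \oo] --> \sum_i l i.
Proof.
move=> H; rewrite unlock /=.
elim: (index_enum I) => [|i s IH] /=; first exact: cvg_cst.
exact: cvgD.
Qed.

Lemma zeta_factor (R : realType) (S A Y Z : finType)
  (rho : S -> Y -> R) (P : S -> Y -> S -> A -> R)
  (phi : Z -> Y -> A -> Z) (z0 : Z) (a0 : A) (L : nat) (mu : nat -> Z -> A -> R)
  (zeta : nat -> S -> Y -> Z -> A -> R) :
  (0 < L)%N -> (forall l, (l < L)%N -> forall z, \sum_a mu l z a = 1) ->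
  (forall l, (l < L)%N -> forall s y z a,
     (fun k => chain_law rho P phi z0 a0 L mu (l + k.+1 * L).-1 s y z a) @ \oo
       --> zeta l s y z a) ->
  forall l, (l < L)%N -> forall s y z a,
  zeta l s y z a = mu l z a * \sum_a' zeta l s y z a'.
Proof.
move=> L0 hmu hconv l Hl s y z a.
have cv1 := hconv l Hl s y z a.
have cv2 : (fun k => chain_law rho P phi z0 a0 L mu (l + k.+1 * L).-1 s y z a) @ \oo
    --> mu l z a * \sum_a' zeta l s y z a'.
  have -> : (fun k => chain_law rho P phi z0 a0 L mu (l + k.+1 * L).-1 s y z a) =
     (fun k => mu l z a * \sum_a' chain_law rho P phi z0 a0 L mu (l + k.+1 * L).-1 s y z a').
    apply: funext => k; rewrite chain_factor //.
    rewrite prednK; last by rewrite addn_gt0 muln_gt0 L0 orbT.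
    by rewrite addnC modnMDl modn_small.
  apply: cvgMr; apply: cvg_sum_fin => a'; exact: hconv.
by rewrite -(cvg_lim (@Rhausdorff R) cv1) (cvg_lim (@Rhausdorff R) cv2).
Qed.

Lemma cond_za_eq (R : realType) (S A Y Z : finType)
  (zeta : S -> Y -> Z -> A -> R) (m : Z -> A -> R) :
  (forall s y z a, zeta s y z a = m z a * \sum_a' zeta s y z a') ->
  forall z a, 0 < \sum_s \sum_y zeta s y z a ->
  forall s, zeta_cond_za zeta s z a = zeta_cond_z zeta s z.
Proof.
move=> F z a hpos s.
have E : forall s, zeta_sza zeta s z a = m z a * zeta_sz zeta s z.
  move=> s0; rewrite /zeta_sza /zeta_sz mulr_sumr; apply: eq_bigr => y _; exact: F.
move: hpos; rewrite /zeta_cond_za /zeta_cond_z.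
change (0 < \sum_s0 zeta_sza zeta s0 z a -> zeta_sza zeta s z a / \sum_s0 zeta_sza zeta s0 z a = zeta_sz zeta s z / \sum_s0 zeta_sz zeta s0 z).
have Es : \sum_s0 zeta_sza zeta s0 z a = m z a * \sum_s0 zeta_sz zeta s0 z.
  by rewrite mulr_sumr; apply: eq_bigr => s0 _; exact: E.
rewrite Es E => hpos.
have h1 : m z a != 0 by apply/eqP => H; move: hpos; rewrite H mul0r ltxx.
have h2 : \sum_s0 zeta_sz zeta s0 z != 0.
  by apply/eqP => H; move: hpos; rewrite H mulr0 ltxx.
by rewrite invfM mulrACA mulfV // mul1r.
Qed.

Lemma ipm_bound (R : realType) (Z : finType) (F : set (Z -> R)) (xi1 xi2 f : Z -> R)
  (d p : R) :
  (ipm_F F xi1 xi2 <= d%:E)%E -> minkowski_F F f = p%:E -> 0 <= d ->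
  `| \sum_z f z * xi1 z - \sum_z f z * xi2 z | <= d * p.
Proof.
move=> Hd Hp d0.
set D := `| _ - _ |.
have Hc : forall c, 0 < c -> F (fun z => f z / c) -> D <= c * d.
  move=> c c0 Fc.
  have : ((`| \sum_z f z / c * xi1 z - \sum_z f z / c * xi2 z |)%:E <= d%:E)%E.
    apply: le_trans Hd; apply: ereal_sup_ubound; by exists (fun z => f z / c).
  rewrite lee_fin.
  have -> : \sum_z f z / c * xi1 z - \sum_z f z / c * xi2 z
     = (\sum_z f z * xi1 z - \sum_z f z * xi2 z) / c.
    rewrite mulrBl !mulr_suml; congr (_ - _); apply: eq_bigr => z _; by rewrite mulrAC.
  by rewrite normrM normfV (gtr0_norm c0) ler_pdivrMr // mulrC.
have [ne|e] := pselect (exists c, 0 < c /\ F (fun z => f z / c)); last first.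
  move: Hp; rewrite /minkowski_F.
  have -> : [set c%:E | c in [set c : R | 0 < c /\ F (fun z => f z / c)]] = set0.
    apply/seteqP; split => // x [c Hc' _]; apply: e; by exists c.
  by rewrite ereal_inf0.
have p0 : 0 <= p.
  rewrite -lee_fin -Hp; apply: le_ereal_inf_tmp => x [c [c0 _] <-].
  by rewrite lee_fin ltW.
have [d00|dpos] := eqVneq d 0.
  case: ne => c [c0 Fc]; have := Hc c c0 Fc; by rewrite d00 mulr0 mul0r.
have dp : 0 < d by rewrite lt_neqAle eq_sym dpos d0.
rewrite mulrC -ler_pdivrMr //.
rewrite -lee_fin -Hp; apply: le_ereal_inf_tmp => x [c [c0 Fc] <-].
by rewrite lee_fin ler_pdivrMr // Hc.
Qed.

Lemma le_sum_term (R : realType) (I : finType) (F : I -> R) (i : I) :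
  (forall j, 0 <= F j) -> F i <= \sum_j F j.
Proof.
move=> H; rewrite (bigD1 i) //= lerDl; apply: sumr_ge0 => j _; exact: H.
Qed.

Lemma le_max_act (R : realType) (A : finType) (f : A -> R) (a : A) :
  f a <= max_act f.
Proof.
rewrite /max_act; apply: ub_le_sup; last by exists a.
exists (\sum_a' `|f a'|) => x [a' _ <-].
apply: le_trans (ler_norm _) _.
rewrite (bigD1 a') //= lerDl; apply: sumr_ge0 => j _; exact: normr_ge0.
Qed.

Lemma sum_next_law (R : realType) (S A Y Z : finType)
  (rho : S -> Y -> R) (P : S -> Y -> S -> A -> R)
  (phi : Z -> Y -> A -> Z) (z0 : Z) (a0 : A) (h : hist A Y) (a : A) (f : Z -> R) :
  \sum_z f z * next_agent_state_law rho P phi z0 a0 h a z =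
  \sum_y pred_obs rho P h a y * f (phi (agent_state phi z0 a0 h) y a).
Proof.
rewrite /next_agent_state_law.
under eq_bigr do rewrite mulr_sumr.
rewrite exchange_big /=; apply: eq_bigr => y _.
under eq_bigr do rewrite mulrCA.
rewrite -mulr_sumr; congr (_ * _).
under eq_bigr do rewrite mulrC; exact: sum_ind.
Qed.

Lemma Ssum_mono (R : realType) (S A Y : finType)
  (rho : S -> Y -> R) (P : S -> Y -> S -> A -> R) (r : S -> A -> R) (gamma : R)
  (pi : hpolicy R A Y) (h : hist A Y) n d :
  0 <= gamma -> (forall k, 0 <= exp_step rho P r pi k h) ->
  Ssum rho P r gamma pi n h <= Ssum rho P r gamma pi (n + d) h.
Proof.
move=> g0 H; rewrite /Ssum big_split_ord /= lerDl; apply: sumr_ge0 => j _.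
apply: mulr_ge0; [exact: exprn_ge0|exact: H].
Qed.

Lemma ge0_notfin (R : realType) (x : \bar R) :
  (0 <= x)%E -> ~ (x \is a fin_num) -> x = +oo%E.
Proof.
move=> x0 H; apply/eqP; apply: contraNT (introN idP H) => Hx.
by rewrite ge0_fin_numE // ltey.
Qed.

Lemma comb_bound (R : realType) (A r0 B B' g eps eta : R) :
  0 <= g -> `|A - r0| <= eps -> `|B - B'| <= eta ->
  `|A + g * B - (r0 + g * B')| <= eps + g * eta.
Proof.
move=> g0 H1 H2.
have -> : A + g * B - (r0 + g * B') = (A - r0) + g * (B - B') by ring.
apply: le_trans (ler_normD _ _) _; rewrite normrM (ger0_norm g0).
by apply: lerD => //; apply: ler_wpM2l.
Qed.

Unset Implicit Arguments.
Set Strict Implicit.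

Theorem theorem2 (R : realType) (S A Y Z : finType)
  (rho : S -> Y -> R) (P : S -> Y -> S -> A -> R) (r : S -> A -> R)
  (Rmax gamma : R) (phi : Z -> Y -> A -> Z) (z0 : Z) (a0 : A) (L : nat)
  (mu : nat -> Z -> A -> R) (zeta : nat -> S -> Y -> Z -> A -> R)
  (Q : nat -> Z -> A -> R) (pimu : nat -> Z -> A) (F : set (Z -> R))
  (hrho : is_dist (fun sy : S * Y => rho sy.1 sy.2))
  (hP : forall s a, is_dist (fun sy : S * Y => P sy.1 sy.2 s a))
  (hr : forall s a, 0 <= r s a <= Rmax)
  (hgamma : 0 <= gamma < 1)
  (hL : (0 < L)%N)
  (hmu : forall l, (l < L)%N -> forall z, is_dist (mu l z))
  (hconv : forall l, (l < L)%N -> forall s y z a,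
     (fun k => chain_law rho P phi z0 a0 L mu (l + k.+1 * L).-1 s y z a) @ \oo
       --> zeta l s y z a)
  (hpos : forall l, (l < L)%N -> forall z a,
     0 < \sum_(s : S) \sum_(y : Y) zeta l s y z a)
  (hQ : forall l, (l < L)%N -> forall z a,
     Q l z a = r_mu r (zeta l) z a +
       gamma * \sum_(z' : Z) P_mu P phi (zeta l) z' z a * max_act (Q ((l + 1) %% L)%N z'))
  (hpi : forall l, (l < L)%N -> forall z, Q l z (pimu l z) = max_act (Q l z))
  (hFc : convex_fset F) (hFb : balanced_fset F) :
  forall t : nat, (0 < t)%N ->
  (ereal_sup [set (Vstar rho P r gamma h
                   - Vpi rho P r gamma (pi_vec R phi z0 a0 L pimu) h)%E
              | h in [set h : hist A Y | htime h = t /\ reachable rho P h]]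
   <= (2 / (1 - gamma ^+ L))%:E *
      \sum_(l < L)
        ((gamma ^+ l)%:E *
         (eps_err rho P r phi z0 a0 L zeta ((t + l) %% L) (t + l) +
          gamma%:E *
          mul_inf (delta_err rho P phi z0 a0 L zeta F ((t + l) %% L) (t + l))
                  (minkowski_F F (fun z => max_act (Q ((t + l + 1) %% L)%N z))))))%E.
Proof.
move=> t Ht0.
have hr0 : forall s y, 0 <= rho s y := fun s y => hrho.1 (s, y).
have hPn : forall s' y s a, 0 <= P s' y s a := fun s' y s a => (hP s a).1 (s', y).
have hP1 : forall s a, \sum_y \sum_s' P s' y s a = 1.
  move=> s a; rewrite exchange_big /= pair_big /=; exact: (hP s a).2.
have hR0 : forall s a, 0 <= r s a by move=> s a; case/andP: (hr s a).
have hmu1 : forall l, (l < L)%N -> forall z, \sum_a mu l z a = 1.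
  by move=> l Hl z; exact: (hmu l Hl z).2.
have hcond : forall l, (l < L)%N -> forall z a s,
    zeta_cond_za (zeta l) s z a = zeta_cond_z (zeta l) s z.
  move=> l Hl z a s; apply: (cond_za_eq (m := mu l)); last exact: hpos.
  move=> s0 y0 z1 a1; exact: (zeta_factor hL hmu1 hconv Hl).
have /andP[g0 g1] := hgamma.
pose pv := pi_vec R phi z0 a0 L pimu.
have pv_valid : valid_hpolicy pv.
  move=> h; split; first by move=> a'; rewrite /pv /pi_vec ler0n.
  have := sum_ind (pimu (htime h %% L)%N (agent_state phi z0 a0 h)) (fun _ : A => (1 : R)).
  by under eq_bigr do rewrite mulr1.
apply: ge_ereal_sup => x [h [Hth Hrh] Hx].
have reach_ext : forall m, exists h', reachable rho P h' /\ htime h' = (t + m)%N.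
  by move=> m; rewrite -Hth; exact: (reach_extend a0 hr0 hPn hP1 m Hrh).
pose epsE := fun l : nat => eps_err rho P r phi z0 a0 L zeta ((t + l) %% L) (t + l).
pose delE := fun l : nat => delta_err rho P phi z0 a0 L zeta F ((t + l) %% L) (t + l).
pose W' := fun l : nat => (fun z => max_act (Q ((t + l + 1) %% L)%N z)).
pose rhoE := fun l : nat => minkowski_F F (W' l).
change (x <= (2 / (1 - gamma ^+ L))%:E * \sum_(l < L)
   ((gamma ^+ l)%:E * (epsE l + gamma%:E * mul_inf (delE l) (rhoE l))))%E.
have eps_ge0 : forall l, (0 <= epsE l)%E.
  move=> l; have [h' [H1 H2]] := reach_ext l.
  apply: le_ereal_sup_tmp; exists (`| exp_reward rho P r h' a0 - \sum_s r s a0 *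
      zeta_cond_za (zeta ((t + l) %% L)%N) s (agent_state phi z0 a0 h') a0 |)%:E;
    last by rewrite lee_fin.
  by exists h', a0; split => //; rewrite H2.
have rho_ge0 : forall l, (0 <= rhoE l)%E.
  by move=> l; apply: le_ereal_inf_tmp => y [c [c0 _] <-]; rewrite lee_fin ltW.
have Fempty : ~ (exists f, F f) -> forall l, rhoE l = +oo%E.
  move=> nF l; rewrite /rhoE /minkowski_F.
  have -> : [set c%:E | c in [set c : R | 0 < c /\ F (fun z => W' l z / c)]] = set0.
    apply/seteqP; split => // y [c [_ Fc] _]; apply: nF; by exists (fun z => W' l z / c).
  by rewrite ereal_inf0.
have del_ge0 : forall f, F f -> forall l, (0 <= delE l)%E.
  move=> f Ff l; have [h' [H1 H2]] := reach_ext l.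
  apply: le_ereal_sup_tmp; exists (ipm_F F (next_agent_state_law rho P phi z0 a0 h' a0)
      (fun z' => P_mu P phi (zeta ((t + l) %% L)%N) z' (agent_state phi z0 a0 h') a0)).
    by exists h', a0; split => //; rewrite H2.
  apply: le_ereal_sup_tmp; eexists; first by exists f.
  by rewrite lee_fin.
have mul_ge0 : forall l, (0 <= mul_inf (delE l) (rhoE l))%E.
  move=> l; rewrite /mul_inf; case: ifPn => // /norP [Hd Hr].
  case: (pselect (exists f, F f)) => [[f Ff]|nF]; last by rewrite Fempty ?eqxx in Hr.
  apply: mule_ge0; [exact: (del_ge0 f Ff l) | exact: rho_ge0].
have gL1 : gamma ^+ L < 1 by rewrite exprn_ilt1 // -lt0n.
set RHS := (_ * _)%E.
have RHS0 : (0 <= RHS)%E.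
  apply: mule_ge0.
    by rewrite lee_fin divr_ge0 // subr_ge0 ltW.
  apply: sume_ge0 => l _; apply: mule_ge0; first by rewrite lee_fin exprn_ge0.
  by apply: adde_ge0 => //; apply: mule_ge0; rewrite ?lee_fin.
have [gz|gnz] := eqVneq gamma 0.
  have Vz : forall pi, valid_hpolicy pi -> Vpi rho P r gamma pi h = 0%E.
    move=> pi Hpi; have Hnn := exp_step_ge0 hr0 hPn hR0 Hpi.
    apply/eqP; rewrite eq_le; apply/andP; split.
      apply: Vpi_le => // n.
      by rewrite gz expr0n Hth (gtn_eqF Ht0) mul0r.
    have := Vpi_ge g0 (Hnn ^~ h) 0.
    by rewrite /Ssum big_ord0 mulr0.
  rewrite -Hx Vz // sube0; apply: le_trans RHS0.
  by apply: ge_ereal_sup => y [pi Hpi <-]; rewrite Vz.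
have gpos : 0 < gamma by rewrite lt_neqAle eq_sym gnz g0.
have [fin|nfin] := pselect (forall l : 'I_L,
   [/\ epsE l \is a fin_num, delE l \is a fin_num & rhoE l \is a fin_num]); last first.
  move/existsNP: nfin => [l Hl].
  have Hmul : ~ (epsE l \is a fin_num) \/ mul_inf (delE l) (rhoE l) = +oo%E.
    case: (pselect (epsE l \is a fin_num)) => He; last by left.
    right; rewrite /mul_inf.
    case: (pselect (rhoE l \is a fin_num)) => Hr; last first.
      by rewrite (ge0_notfin (rho_ge0 l) Hr) eqxx orbT.
    case: (pselect (exists f, F f)) => [[f Ff]|nF]; last by rewrite Fempty // eqxx orbT.
    case: (pselect (delE l \is a fin_num)) => Hd; first by exfalso; apply: Hl.
    by rewrite (ge0_notfin (del_ge0 f Ff l) Hd) eqxx.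
  have Hsum : ((gamma ^+ l)%:E * (epsE l + gamma%:E * mul_inf (delE l) (rhoE l)))%E = +oo%E.
    have -> : (epsE l + gamma%:E * mul_inf (delE l) (rhoE l))%E = +oo%E.
      case: Hmul => [He|->].
        rewrite (ge0_notfin (eps_ge0 l) He) addye //.
        apply: contraTN isT => /eqP Hm.
        have g0E : (0 <= gamma%:E)%E by rewrite lee_fin.
        have := mule_ge0 g0E (mul_ge0 l).
        by rewrite Hm.
      rewrite gt0_muley ?lte_fin // addey //.
      by apply: contraTN isT => /eqP Hm; have := eps_ge0 l; rewrite Hm.
    by rewrite gt0_muley // lte_fin exprn_gt0.
  suff -> : RHS = +oo%E by exact: leey.
  rewrite /RHS (bigD1 l) //= Hsum addye; last first.
    apply: contraTN isT => /eqP Hm.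
    have : (0 <= \sum_(i < L | i != l) ((gamma ^+ i)%:E *
        (epsE i + gamma%:E * mul_inf (delE i) (rhoE i))))%E.
      apply: sume_ge0 => i _; apply: mule_ge0; first by rewrite lee_fin exprn_ge0.
      by apply: adde_ge0 => //; apply: mule_ge0; rewrite ?lee_fin.
    by rewrite Hm.
  by rewrite gt0_muley // lte_fin divr_gt0 // subr_gt0.
pose eR := fun l : nat => fine (epsE l).
pose dR := fun l : nat => fine (delE l).
pose pR := fun l : nat => fine (rhoE l).
have Hfin : forall l, (l < L)%N ->
    [/\ epsE l = (eR l)%:E, delE l = (dR l)%:E & rhoE l = (pR l)%:E].
  move=> l Hl; have [h1 h2 h3] := fin (Ordinal Hl).
  by rewrite /eR /dR /pR !fineK.
have dR0 : forall l, (l < L)%N -> 0 <= dR l.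
  move=> l Hl; apply: fine_ge0.
  case: (pselect (exists f, F f)) => [[f Ff]|nF]; first exact: (del_ge0 f Ff l).
  have [_ _ h3] := Hfin l Hl; by move: h3; rewrite Fempty.
have pR0 : forall l, 0 <= pR l := fun l => fine_ge0 (rho_ge0 l).
have eR0 : forall l, 0 <= eR l := fun l => fine_ge0 (eps_ge0 l).
have mulEq : forall l, (l < L)%N -> mul_inf (delE l) (rhoE l) = (dR l * pR l)%:E.
  by move=> l Hl; have [_ -> ->] := Hfin l Hl.
pose E := fun l : nat => eR l + gamma * (dR l * pR l).
pose e := fun k : nat => E (k %% L)%N.
pose Wt := fun (tau : nat) z => max_act (Q (tau %% L)%N z).
pose C := \sum_(l < L) \sum_z `|max_act (Q l z)|.
have HC : forall tau z, `|Wt tau z| <= C.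
  move=> tau z; rewrite /Wt.
  have Hl : (tau %% L < L)%N by rewrite ltn_pmod.
  apply: le_trans (_ : \sum_z `|max_act (Q (Ordinal Hl) z)| <= C).
    rewrite (bigD1 z) //= lerDl; apply: sumr_ge0 => *; exact: normr_ge0.
  rewrite /C (bigD1 (Ordinal Hl)) //= lerDl; apply: sumr_ge0 => *.
  apply: sumr_ge0 => *; exact: normr_ge0.
have Hkey : forall k h' a, reachable rho P h' -> htime h' = (t + k)%N ->
   `|exp_reward rho P r h' a + gamma * \sum_y pred_obs rho P h' a y *
        Wt (t + k).+1 (phi (agent_state phi z0 a0 h') y a)
     - Q ((t + k) %% L)%N (agent_state phi z0 a0 h') a| <= e k.
  move=> k h' a Hr' Ht'.
  set l := (k %% L)%N.
  have Hl : (l < L)%N by rewrite ltn_pmod.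
  set z := agent_state phi z0 a0 h'.
  have Hres : ((t + k) %% L = (t + l) %% L)%N by rewrite /l modnDmr.
  have Hres1 : ((t + k).+1 %% L = (t + l + 1) %% L)%N.
    by rewrite -addn1 -modnDml Hres modnDml.
  have He : `|exp_reward rho P r h' a - r_mu r (zeta ((t + k) %% L)%N) z a| <= eR l.
    have [h1 _ _] := Hfin l Hl.
    rewrite -lee_fin -h1 Hres.
    apply: ereal_sup_ubound; exists h', a; split => //.
    - by rewrite Ht' leq_add2l leq_mod.
    - by rewrite Ht' Hres.
    - congr (_%:E); congr (`|_ - _|); rewrite /r_mu; apply: eq_bigr => s _.
      by rewrite hcond // ltn_pmod.
  have HW : forall z', Wt (t + k).+1 z' = W' l z' by move=> z'; rewrite /Wt Hres1.
  have Hd : `|\sum_y pred_obs rho P h' a y * Wt (t + k).+1 (phi z y a)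
      - \sum_z' P_mu P phi (zeta ((t + k) %% L)%N) z' z a * Wt (t + k).+1 z'|
      <= dR l * pR l.
    have [_ h2 h3] := Hfin l Hl.
    have := ipm_bound (xi1 := next_agent_state_law rho P phi z0 a0 h' a)
      (xi2 := fun z' => P_mu P phi (zeta ((t + l) %% L)%N) z' z a) _ h3 (dR0 l Hl).
    rewrite sum_next_law -/z Hres.
    move=> H.
    have -> : \sum_z' P_mu P phi (zeta ((t + l) %% L)%N) z' z a * Wt (t + k).+1 z'
       = \sum_z1 W' l z1 * P_mu P phi (zeta ((t + l) %% L)%N) z1 z a.
      by apply: eq_bigr => z1 _; rewrite HW mulrC.
    have -> : \sum_y pred_obs rho P h' a y * Wt (t + k).+1 (phi z y a)
       = \sum_y pred_obs rho P h' a y * W' l (phi z y a).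
      by apply: eq_bigr => y _; rewrite HW.
    apply: H; rewrite -h2.
    apply: ereal_sup_ubound; exists h', a; split => //.
    - by rewrite Ht' leq_add2l leq_mod.
    - by rewrite Ht' Hres.
  have HQ := hQ _ (ltn_pmod (t + k) hL) z a.
  have Hidx : (((t + k) %% L + 1) %% L = (t + k).+1 %% L)%N by rewrite modnDml addn1.
  rewrite HQ Hidx; exact: (comb_bound g0 He Hd).
have Hup : forall k h' a, reachable rho P h' -> htime h' = (t + k)%N ->
     exp_reward rho P r h' a + gamma * \sum_y pred_obs rho P h' a y *
        Wt (t + k).+1 (phi (agent_state phi z0 a0 h') y a)
     <= Wt (t + k)%N (agent_state phi z0 a0 h') + e k.
  move=> k h' a Hr' Ht'; have := Hkey k h' a Hr' Ht'; rewrite ler_norml => /andP[_ H2].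
  have Hm := le_max_act (Q ((t + k) %% L)%N (agent_state phi z0 a0 h')) a.
  rewrite /Wt; lra.
have Hlow : forall k h', reachable rho P h' -> htime h' = (t + k)%N ->
     let a := pimu ((t + k) %% L)%N (agent_state phi z0 a0 h') in
     Wt (t + k)%N (agent_state phi z0 a0 h') - e k <=
     exp_reward rho P r h' a + gamma * \sum_y pred_obs rho P h' a y *
        Wt (t + k).+1 (phi (agent_state phi z0 a0 h') y a).
  move=> k h' Hr' Ht' /=.
  have := Hkey k h' (pimu ((t + k) %% L)%N (agent_state phi z0 a0 h')) Hr' Ht'.
  rewrite ler_norml => /andP[H1 _].
  have Hp := hpi _ (ltn_pmod (t + k) hL) (agent_state phi z0 a0 h').
  rewrite /Wt -Hp; lra.
pose X := \sum_(l < L) gamma ^+ l * E l.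
pose G := X / (1 - gamma ^+ L).
have HT : forall n, \sum_(j < n) gamma ^+ j * e (0 + j)%N <= G.
  move=> n; under eq_bigr do rewrite add0n.
  apply: periodic_bound => // l Hl; rewrite /E; apply: addr_ge0 => //.
  by apply: mulr_ge0 => //; apply: mulr_ge0 => //; apply: dR0.
have C0 : 0 <= C := le_trans (normr_ge0 _) (HC 0%N z0).
have Ht0' : htime h = (t + 0)%N by rewrite addn0.
have HSup : forall pi, valid_hpolicy pi -> forall n,
    Ssum rho P r gamma pi n h <= Wt t (agent_state phi z0 a0 h) + G + gamma ^+ n * C.
  move=> pi Hpi n.
  have := Ssum_upper g0 Hpi hr0 hPn hP1 HC Hup n Hrh Ht0'.
  rewrite addn0 => H; apply: le_trans H _; rewrite lerD2r lerD2l; exact: HT.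
have VU : forall pi, valid_hpolicy pi ->
    (Vpi rho P r gamma pi h <= (gamma ^+ t * (Wt t (agent_state phi z0 a0 h) + G))%:E)%E.
  move=> pi Hpi; have Hnn := exp_step_ge0 hr0 hPn hR0 Hpi.
  apply: Vpi_le => // n; rewrite Hth; apply: ler_wpM2l; first exact: exprn_ge0.
  apply: (lim_slack (c := C) hgamma) => m.
  apply: le_trans (Ssum_mono n m g0 (Hnn ^~ h)) _.
  apply: le_trans (HSup pi Hpi (n + m)%N) _.
  rewrite lerD2l; apply: (ler_wpM2r C0); rewrite exprD.
  apply: ler_piMl; first exact: exprn_ge0.
  exact: exprn_ile1 (ltW g1).
have HSlow : forall n, Wt t (agent_state phi z0 a0 h) - G - gamma ^+ n * C
    <= Ssum rho P r gamma pv n h.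
  move=> n; have := Ssum_lower (r := r) g0 hr0 hPn hP1 HC Hlow n Hrh Ht0'.
  rewrite addn0 => H; apply: le_trans H; rewrite lerD2r lerD2l lerN2; exact: HT.
set v := Vpi rho P r gamma pv h.
have pvnn := exp_step_ge0 hr0 hPn hR0 pv_valid.
have v0 : (0 <= v)%E.
  by have := Vpi_ge g0 (pvnn ^~ h) 0; rewrite /Ssum big_ord0 mulr0.
have vfin : v \is a fin_num.
  by rewrite ge0_fin_numE //; apply: le_lt_trans (VU pv pv_valid) _; exact: ltry.
set Wh := Wt t (agent_state phi z0 a0 h).
have Hv : gamma ^+ t * (Wh - G) <= fine v.
  apply: (lim_slack (c := gamma ^+ t * C) hgamma) => m.
  have H1 := Vpi_ge g0 (pvnn ^~ h) m.
  rewrite -/v -(fineK vfin) lee_fin Hth in H1.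
  have H2 := ler_wpM2l (exprn_ge0 t g0) (HSlow m).
  have -> : gamma ^+ t * (Wh - G) = gamma ^+ t * (Wh - G - gamma ^+ m * C)
     + gamma ^+ m * (gamma ^+ t * C) by ring.
  by rewrite lerD2r; apply: le_trans H2 H1.
have HVs : (Vstar rho P r gamma h <= (gamma ^+ t * (Wh + G))%:E)%E.
  by apply: ge_ereal_sup => y [pi Hpi <-]; exact: VU.
have HRHS : RHS = ((2 / (1 - gamma ^+ L)) * X)%:E.
  rewrite /RHS (EFinM (2 / _) X); congr (_ * _)%E; rewrite /X -sumEFin; apply: eq_bigr => l _.
  have [-> _ _] := Hfin l (ltn_ord l).
  by rewrite mulEq // -EFinM -EFinD -EFinM.
rewrite -Hx -/v -(fineK vfin) HRHS.
apply: le_trans (_ : (_ <= (gamma ^+ t * (Wh + G) - fine v)%:E)%E) _.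
  by rewrite EFinB; apply: leeD2r.
rewrite lee_fin.
have X0 : 0 <= X.
  apply: sumr_ge0 => l _; apply: mulr_ge0; first exact: exprn_ge0.
  by apply: addr_ge0 => //; apply: mulr_ge0 => //; apply: mulr_ge0 => //; apply: dR0.
have G0 : 0 <= G by apply: divr_ge0 => //; rewrite subr_ge0 ltW.
have HG : gamma ^+ t * G <= G by apply: ler_piMl => //; exact: exprn_ile1 (ltW g1).
have -> : 2 / (1 - gamma ^+ L) * X = 2 * G by rewrite /G; ring.
have -> : gamma ^+ t * (Wh + G) = gamma ^+ t * (Wh - G) + 2 * (gamma ^+ t * G) by ring.
lra.
Qed.
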